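(* Let $k$ be a field, $p \in k[t]$ a monic irreducible separable polynomial of degree $d$, $\alpha$ a root of $p$ in an algebraic closure of $k$, and $K = k(\alpha)$. Let $\lambda$ be a partition of $n$. Then the centralizer of $J_\lambda(C_p)$ in $M_{nd}(k)$ is isomorphic as a $k$-algebra to $K[x]_\lambda$.
   Context: $C_p$ is the $d\times d$ companion matrix of $p$, i.e. the matrix of multiplication by $\alpha$ on $K$ with respect to the $k$-basis $1,\alpha,\dots,\alpha^{d-1}$. For a $d\times d$ matrix $A$, $J_m(A)$ is the $md\times md$ block matrix with $A$ in each diagonal block, $I_d$ in each block directly below the diagonal, and $0$ elsewhere; $J_\lambda(A) = \bigoplus_i J_{\lambda_i}(A)$. For a field $K$ and partition $\lambda=(\lambda_1\ge\dots\ge\lambda_s)$, $K[x]_\lambda$ is the quotient $\mathcal{A}/\mathcal{I}$, where $\mathcal{A}$ is the algebra of $s\times s$ matrices over $K[x]$ whose $(i,j)$ entry lies in $x^{\max(0,\lambda_i-\lambda_j)}K[x]$, and $\mathcal{I}$ is the two-sided ideal of matrices whose entries in row $i$ all lie in $x^{\lambda_i}K[x]$. *)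

(* Defs.v *)
From HB Require Import structures.
From mathcomp Require Import all_boot all_order all_algebra all_field.
Set Implicit Arguments. Unset Strict Implicit. Unset Printing Implicit Defensive.
Import GRing.Theory.
Local Open Scope ring_scope.

(* Companion matrix C_p in the column convention of the paper: the matrix of
   multiplication by alpha on K = k[t]/(p) in the basis 1, alpha, ...,
   alpha^(d-1), acting on column vectors.  MathComp's [companionmx] uses the
   row-vector convention, so C_p is its transpose. *)
Definition compmx {k : fieldType} (p : {poly k}) : 'M[k]_((size p).-1) :=
  (companionmx p)^T.

Definition jordan_blk {R : nzRingType} {d : nat} (m : nat) (A : 'M[R]_d)
  : 'M[R]_(\sum_(i < m) d) :=
  @mxblock R m m (fun _ => d) (fun _ => d)
    (fun i j => if i == j then A
                else if (i : nat) == j.+1 then 1%:M else 0).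

Definition jsize (lam : seq nat) (d : nat) : nat :=
  \sum_(i < size lam) \sum_(j < nth 0 lam i) d.

Definition jordan {R : nzRingType} {d : nat} (lam : seq nat) (A : 'M[R]_d)
  : 'M[R]_(jsize lam d) :=
  @mxdiag R (size lam) (fun i => \sum_(j < nth 0 lam i) d)
    (fun i => jordan_blk (nth 0 lam i) A).

Definition is_partition (n : nat) (lam : seq nat) : Prop :=
  [/\ sorted geq lam, all (fun x => 0 < x)%N lam & sumn lam = n].

(* The algebra A of K[x]_lambda: s x s matrices over K[x] whose (i,j) entry
   lies in x^(max(0, lambda_i - lambda_j)) K[x]. *)
Definition in_Kxl_alg {K : fieldType} (lam : seq nat)
  (M : 'M[{poly K}]_(size lam)) : Prop :=
  forall i j : 'I_(size lam), 'X^(nth 0 lam i - nth 0 lam j) %| M i j.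

Definition in_Kxl_ideal {K : fieldType} (lam : seq nat)
  (M : 'M[{poly K}]_(size lam)) : Prop :=
  forall i j : 'I_(size lam), 'X^(nth 0 lam i) %| M i j.

Arguments in_Kxl_alg {K} lam M.
Arguments in_Kxl_ideal {K} lam M.

Definition in_centralizer {k : fieldType} {N : nat} (J B : 'M[k]_N) : Prop :=
  B *m J = J *m B.

(* Since the quotient A/I is not built
   as a type, the k-algebra isomorphism A/I ~ C(J) is expressed by a map f
   defined on A which is a unital k-algebra homomorphism A -> C(J), onto
   C(J), with kernel exactly I (equivalently, f induces a k-algebra
   isomorphism A/I -> C(J)). *)
Definition centralizer_iso_Kxl {k : fieldType} {K : fieldExtType k}
  (lam : seq nat) {N : nat} (J : 'M[k]_N) : Prop :=
  exists f : 'M[{poly K}]_(size lam) -> 'M[k]_N,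
    [/\ forall M, in_Kxl_alg lam M -> in_centralizer J (f M),
        f 1%:M = 1%:M,
      ( forall M M', in_Kxl_alg lam M -> in_Kxl_alg lam M' ->
          f (M + M') = f M + f M') /\
      ( forall M M', in_Kxl_alg lam M -> in_Kxl_alg lam M' ->
          f (M *m M')  = f M *m f M') /\
      ( forall (c : k) M, in_Kxl_alg lam M ->
          f ((in_alg K c)%:P *: M) = c *: f M),
        forall B, in_centralizer J B -> exists2 M, in_Kxl_alg lam M & f M = B
      & forall M, in_Kxl_alg lam M -> (f M = 0 <-> in_Kxl_ideal lam M)].

(* Main.v *)
Require Import Defs.
From HB Require Import structures.
From mathcomp Require Import all_boot all_order all_algebra all_field.
From mathcomp Require Import zify ring.
Set Implicit Arguments. Unset Strict Implicit. Unset Printing Implicit Defensive.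
Import GRing.Theory.
Local Open Scope ring_scope.

Lemma coef_trunc_mul (R : comNzRingType) (P Q : {poly R}) (m1 m2 a g : nat) :
  (forall t, (t < m1 - m2)%N -> P`_t = 0) -> (a < m1)%N -> (g <= a)%N ->
  \sum_(c < m2) (if (g <= c <= a)%N then P`_(a - c) * Q`_(c - g) else 0)
  = (P * Q)`_(a - g).
Proof.
move=> HP am ga.
rewrite -big_mkcond /= (big_ord_widen_cond (a.+1 + m2) (fun c => (g <= c <= a)%N) (fun c => P`_(a - c) * Q`_(c - g)) (leq_addl a.+1 m2)).
rewrite big_mkcond /=.
rewrite (eq_bigr (fun c : 'I_(a.+1 + m2) => if (g <= c)%N && (c < a.+1)%N then P`_(a - c) * Q`_(c - g) else 0)); last first.
  move=> c _; case: (ltnP c m2) => cm; rewrite ?andbT ?andbF ltnS //.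
  case: ifP => // /andP [gc ca]; rewrite HP ?mul0r //; lia.
rewrite -big_mkcond -(big_ord_widen_cond (a.+1 + m2) (fun c => (g <= c)%N) (fun c => P`_(a - c) * Q`_(c - g)) (leq_addr m2 a.+1)).
rewrite (eq_bigl (fun i : 'I_a.+1 => predT i && (g <= i)%N)) // -(big_geq_mkord g a.+1 predT (fun c => P`_(a - c) * Q`_(c - g))).
rewrite -{1}(add0n g) big_addn big_mkord coefMr.
have -> : (a.+1 - g = (a - g).+1)%N by lia.
apply: eq_bigr => j _; congr (P`_ _ * Q`_ _); lia.
Qed.

Lemma dvdXnP (F : fieldType) (m : nat) (P : {poly F}) :
  ('X^m %| P) <-> (forall t, (t < m)%N -> P`_t = 0).
Proof.
split.
  by move=> /dvdpP [q ->] t tm; rewrite coefMXn tm.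
move=> H; rewrite -(poly_take_drop m P).
have -> : take_poly m P = 0.
  by apply/polyP => i; rewrite coef_take_poly coef0; case: ifP => // /H.
by rewrite add0r dvdp_mulIr.
Qed.

Lemma mxblockZ (R : pzRingType) (m1 m2 : nat) (p_ : 'I_m1 -> nat) (q_ : 'I_m2 -> nat)
  (B : forall i j, 'M[R]_(p_ i, q_ j)) (c : R) :
  c *: mxblock B = mxblock (fun i j => c *: B i j).
Proof. by apply/matrixP => s t; rewrite !mxE. Qed.

Lemma mxblock_diagE (R : pzRingType) (m : nat) (p_ : 'I_m -> nat)
  (B : forall i j, 'M[R]_(p_ i, p_ j)) (D : forall i, 'M[R]_(p_ i)) :
  (forall i, B i i = D i) -> (forall i j, i != j -> B i j = 0) ->
  mxblock B = mxdiag D.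
Proof.
move=> HD H0; apply: eq_mxblock => i j; case: (eqVneq i j) => [eij|nij].
  by subst j; rewrite conform_mx_id HD.
exact: H0.
Qed.

Lemma taylor1 (R : comNzRingType) (g : {poly R}) (a : R) (h : {poly R}) :
  exists r, g \Po (a%:P + h) = (g.[a])%:P + h * (g^`().[a])%:P + h ^+ 2 * r.
Proof.
elim/poly_ind: g => [|g c [r IH]].
  by exists 0; rewrite comp_poly0 deriv0 !horner0 polyC0 !mulr0 !addr0.
exists (r * (a%:P + h) + (g^`().[a])%:P).
rewrite comp_poly_MXaddC IH derivMXaddC hornerMXaddC hornerD hornerM hornerX.
rewrite !polyCD !polyCM; ring.
Qed.

Section Hensel.
Variables (k : fieldType) (K : fieldExtType k) (alpha : K) (p : {poly k}).
Hypothesis proot : root (map_poly (in_alg K) p) alpha.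
Hypothesis psep : (map_poly (in_alg K) p)^`().[alpha] != 0.
Hypothesis Kgen : <<1%VS; alpha>>%VS = fullv.

Local Notation mp q := (map_poly (in_alg K) q).

Lemma hensel m : exists q : {poly k},
  'X^m %| mp q \Po ('X + alpha%:P) - alpha%:P.
Proof.
set pi := (mp p)^`().[alpha].
have /Fadjoin1_polyP [w Hw] : pi^-1 \in <<1%VS; alpha>>%VS by rewrite Kgen memvf.
suff H : forall m, exists q : {poly k}, 'X^(m.+1) %| mp q \Po ('X + alpha%:P) - alpha%:P.
  have [q Hq] := H m; exists q; apply: dvdp_trans Hq; exact: dvdp_exp2l.
clear m; elim=> [|m [q Hq]].
  by exists 'X; rewrite map_polyX comp_polyX addrK expr1 dvdpp.
set sig := mp q \Po ('X + alpha%:P) in Hq *.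
set del := sig - alpha%:P in Hq.
have sigE : sig = alpha%:P + del by rewrite /del addrC subrK.
exists (q - (w \Po q) * (p \Po q)).
rewrite rmorphB rmorphM /= !map_comp_poly comp_polyB comp_polyM -!comp_polyA -/sig sigE.
have [r1 ->] := taylor1 (mp p) alpha del.
have [r2 ->] := taylor1 (mp w) alpha del.
rewrite (rootP proot) -/pi -Hw.
have -> : alpha%:P + del - ((pi^-1)%:P + del * ((mp w)^`().[alpha])%:P + del ^+ 2 * r2) *
    (0%:P + del * pi%:P + del ^+ 2 * r1) - alpha%:P =
  del * (1 - (pi^-1)%:P * pi%:P) - del ^+ 2 * ((pi^-1)%:P * r1 +
    (((mp w)^`().[alpha])%:P + del * r2) * (pi%:P + del * r1)).
  rewrite polyC0; ring.
rewrite -polyCM mulVf // subrr mulr0 add0r.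
have [t ->] := dvdpP _ _ Hq.
rewrite dvdpNr; apply: dvdp_mulr.
rewrite exprMn dvdp_mull // -exprM dvdp_exp2l //; lia.
Qed.

End Hensel.

Lemma comm_diag_blocks (R : pzRingType) (m1 m2 : nat) (p_ : 'I_m1 -> nat)
  (q_ : 'I_m2 -> nat) (B : 'M[R]_(\sum_i p_ i, \sum_j q_ j))
  (D1 : forall i, 'M[R]_(p_ i)) (D2 : forall j, 'M[R]_(q_ j)) :
  B *m mxdiag D2 = mxdiag D1 *m B ->
  forall i j, submxblock B i j *m D2 j = D1 i *m submxblock B i j.
Proof.
have E : B = mxblock (fun i j => submxblock B i j) by rewrite submxblockK.
move=> H i j; move: H; rewrite {1 2}E mul_mxblock_mxdiag mul_mxdiag_mxblock.
by move=> /eq_mxblockP /(_ i j).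
Qed.

Lemma sum_delta (V : nmodType) (m x : nat) (h : nat -> V) :
  \sum_(c < m) (if (c : nat) == x then h c else 0) = if (x < m)%N then h x else 0.
Proof.
case: ltnP => xm.
  rewrite (bigD1 (Ordinal xm)) //= eqxx big1 ?addr0 // => c.
  by rewrite -(inj_eq val_inj) /= => /negPf ->.
by rewrite big1 // => c _; case: eqP => // e; move: (ltn_ord c); rewrite e ltnNge xm.
Qed.

Section Basis.
Variables (k : fieldType) (K : fieldExtType k) (alpha : K) (p : {poly k}).
Hypothesis pmonic : p \is monic.
Hypothesis pirr : irreducible_poly p.
Hypothesis proot : root (map_poly (in_alg K) p) alpha.
Hypothesis Kgen : <<1%VS; alpha>>%VS = fullv.

Local Notation d := (size p).-1.

Lemma small_root0 (q : {poly k}) :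
  root (map_poly (in_alg K) q) alpha -> (size q < size p)%N -> q = 0.
Proof.
move=> rq sq; apply/eqP; apply/negPn/negP => q0.
have rg : root (map_poly (in_alg K) (gcdp p q)) alpha by rewrite gcdp_map root_gcd proot.
have sg : size (gcdp p q) != 1%N.
  apply/negP => /size_poly1P [c c0 gc]; move: rg; rewrite gc map_polyC /= rootC.
  by rewrite /= scaler_eq0 oner_eq0 orbF (negPf c0).
have := pirr.2 _ sg (dvdp_gcdl p q) => ep.
have : p %| q by rewrite -(eqp_dvdl _ ep) dvdp_gcdr.
by move/(dvdp_leq q0); rewrite leqNgt sq.
Qed.

Definition Xb : d.-tuple K := [tuple alpha ^+ i | i < d].

Lemma Xb_nth (i : 'I_d) : Xb`_i = alpha ^+ i.
Proof. by rewrite -tnth_nth tnth_mktuple. Qed.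

Lemma d_gt0 : (0 < d)%N.
Proof. by case: pirr => /= H _; rewrite -subn1 subn_gt0. Qed.

Lemma Xb_free : free Xb.
Proof.
apply/freeP => c Hc i.
pose q := \sum_(j < d) c j *: 'X^j.
have Hq : root (map_poly (in_alg K) q) alpha.
  apply/rootP; rewrite -Hc rmorph_sum horner_sum; apply: eq_bigr => j _.
  by rewrite Xb_nth -mul_polyC rmorphM /= map_polyC map_polyXn hornerCM hornerXn mulr_algl.
have sq : (size q < size p)%N.
  have : (size q <= d)%N.
    apply/leq_sizeP => j dj; rewrite coef_sum big1 // => i0 _.
    by rewrite coefZ coefXn (_ : (j == i0) = false) ?mulr0 //; apply/negbTE; rewrite neq_ltn (leq_trans (ltn_ord i0) dj) orbT.
  have := d_gt0; case: (size p) => //= m; lia.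
have /(congr1 (fun r : {poly k} => r`_i)) := small_root0 Hq sq.
rewrite coef_sum coef0 (bigD1 i) //= coefZ coefXn eqxx mulr1 big1 ?addr0 //.
by move=> j ji; rewrite coefZ coefXn (_ : (i == j :> nat) = false) ?mulr0 //; apply/negbTE; rewrite eq_sym; exact: ji.
Qed.

Lemma p_neq0 : p != 0. Proof. exact: irredp_neq0. Qed.

Lemma Xb_span v : v \in <<Xb>>%VS.
Proof.
have /Fadjoin1_polyP [r ->] : v \in <<1%VS; alpha>>%VS by rewrite Kgen memvf.
rewrite (divp_eq r p) rmorphD rmorphM hornerD hornerM /= (rootP proot) mulr0 add0r.
rewrite horner_coef rpred_sum // => i _; rewrite coef_map /= mulr_algl memvZ //.
have ip : (i < d)%N.
  have := ltn_modp r p; rewrite p_neq0 => H; have := ltn_ord i; rewrite [X in (_ < X)%N -> _]size_map_poly => Hi.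
  move: (nat_of_ord i) (size (r %% p)) (size p) Hi H => a b c; rewrite -subn1; lia.
by rewrite -(Xb_nth (Ordinal ip)) memv_span // mem_nth // size_tuple.
Qed.

Lemma Xb_coord v : v = \sum_i coord Xb i v *: Xb`_i.
Proof. exact/coord_span/Xb_span. Qed.

Definition Lmul (u : K) : 'M[k]_d := \matrix_(b, e) coord Xb b (u * Xb`_e).

Lemma LmulD u v : Lmul (u + v) = Lmul u + Lmul v.
Proof. by apply/matrixP => b e; rewrite !mxE mulrDl linearD. Qed.

Lemma Lmul0 : Lmul 0 = 0.
Proof. by apply/matrixP => b e; rewrite !mxE mul0r linear0. Qed.

Lemma LmulN u : Lmul (- u) = - Lmul u.
Proof. by apply/matrixP => b e; rewrite !mxE mulNr linearN. Qed.

Lemma LmulZ c u : Lmul (c *: u) = c *: Lmul u.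
Proof. by apply/matrixP => b e; rewrite !mxE -scalerAl linearZ. Qed.

Lemma Lmul1 : Lmul 1 = 1%:M.
Proof.
apply/matrixP => b e; rewrite !mxE mul1r coord_free ?Xb_free //.
by rewrite eq_sym.
Qed.

Lemma LmulM u v : Lmul (u * v) = Lmul u *m Lmul v.
Proof.
apply/matrixP => b e; rewrite !mxE -mulrA {1}(Xb_coord (v * Xb`_e)).
rewrite mulr_sumr linear_sum; apply: eq_bigr => c _.
by rewrite mxE mxE -scalerAr linearZ /= mulrC.
Qed.

Lemma Lmul_sum I (r : seq I) (P : pred I) (F : I -> K) :
  Lmul (\sum_(i <- r | P i) F i) = \sum_(i <- r | P i) Lmul (F i).
Proof. by elim/big_rec2: _ => [|i x y _ <-]; rewrite ?Lmul0 ?LmulD. Qed.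

Lemma Lmul_inj u : Lmul u = 0 -> u = 0.
Proof.
move=> /matrixP H; rewrite (Xb_coord u) big1 // => b _.
have := H b (Ordinal d_gt0); rewrite !mxE Xb_nth expr0 mulr1 => ->.
by rewrite scale0r.
Qed.

Lemma compmx_Lmul : compmx p = Lmul alpha.
Proof.
apply/matrixP => b e; rewrite !mxE.
have Hroot : alpha ^+ d = - \sum_(i < d) p`_i *: alpha ^+ i.
  have := rootP proot; rewrite horner_coef.
  have -> : size (map_poly (in_alg K) p) = d.+1.
    rewrite size_map_poly; have := d_gt0; by case: (size p).
  rewrite big_ord_recr /= coef_map /= -lead_coefE (monicP pmonic) scale1r.
  rewrite mul1r => /eqP; rewrite addrC addr_eq0 => /eqP ->; congr (- _).
  by apply: eq_bigr => i _; rewrite coef_map /= mulr_algl.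
rewrite Xb_nth -exprS.
case: eqP => He.
  have -> : e.+1 = d by have := d_gt0; rewrite He; case: (d).
  rewrite Hroot -sumrN.
  rewrite (eq_bigr (fun i : 'I_d => (- p`_i) *: Xb`_i)); last first.
    by move=> i _; rewrite Xb_nth scaleNr.
  by rewrite coord_sum_free ?Xb_free.
have ed : (e.+1 < d)%N.
  have H2 := ltn_ord e; have H1 : (e:nat) != d.-1 by apply/eqP.
  lia.
by rewrite -(Xb_nth (Ordinal ed)) coord_free ?Xb_free.
Qed.


Definition bsz (m : nat) : nat := (\sum_(a < m) d)%N.

Definition Gb (m1 m2 : nat) (P : {poly K}) : 'M[k]_(bsz m1, bsz m2) :=
  @mxblock _ m1 m2 (fun _ => d) (fun _ => d)
    (fun a c => if (c <= a)%N then Lmul P`_(a - c) else 0).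

Lemma GbM (m1 m2 m3 : nat) (P Q : {poly K}) :
  (forall t, (t < m1 - m2)%N -> P`_t = 0) ->
  Gb m1 m2 P *m Gb m2 m3 Q = Gb m1 m3 (P * Q).
Proof.
move=> HP; rewrite mul_mxblock; apply: eq_mxblock => a g.
rewrite (eq_bigr (fun c : 'I_m2 => Lmul (if (g <= c <= a)%N then P`_(a - c) * Q`_(c - g) else 0))); last first.
  move=> c _; case: (leqP c a) => ca; case: (leqP g c) => gc;
    rewrite ?andbT ?andbF ?mulmx0 ?mul0mx ?Lmul0 ?LmulM //.
rewrite -Lmul_sum; case: (leqP g a) => ga.
  by rewrite (coef_trunc_mul _ HP).
rewrite big1 ?Lmul0 // => c _; case: ifP => // /andP [gc ca]; lia.
Qed.


Lemma GbD m1 m2 P Q : Gb m1 m2 (P + Q) = Gb m1 m2 P + Gb m1 m2 Q.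
Proof.
rewrite /Gb -mxblockD; apply: eq_mxblock => a c.
by case: ifP; rewrite ?addr0 // coefD LmulD.
Qed.

Lemma Gb0 m1 m2 : Gb m1 m2 0 = 0.
Proof.
rewrite /Gb -(@mxblock0 _ _ _ (fun _ : 'I_m1 => d) (fun _ : 'I_m2 => d)).
by apply: eq_mxblock => a c; case: ifP; rewrite // coef0 Lmul0.
Qed.

Lemma GbZ m1 m2 (c : k) P : Gb m1 m2 ((c%:A)%:P * P) = c *: Gb m1 m2 P.
Proof.
rewrite /Gb mxblockZ; apply: eq_mxblock => a b.
by case: ifP; rewrite ?scaler0 // coefCM mulr_algl LmulZ.
Qed.

Lemma Gb_eq0 m1 m2 P : (0 < m2)%N -> (Gb m1 m2 P = 0 <-> 'X^m1 %| P).
Proof.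
move=> m2p; rewrite dvdXnP.
rewrite /Gb -(@mxblock0 _ _ _ (fun _ : 'I_m1 => d) (fun _ : 'I_m2 => d)).
split.
  move/eq_mxblockP => H t tm; have := H (Ordinal tm) (Ordinal m2p).
  by rewrite /= subn0 => /Lmul_inj.
move=> H; apply: eq_mxblock => a c; case: ifP => // ca.
by rewrite H ?Lmul0 // (leq_ltn_trans (leq_subr _ _) (ltn_ord a)).
Qed.


Lemma Gb_sum m1 m2 (I : Type) (r : seq I) (Pr : pred I) (F : I -> {poly K}) :
  Gb m1 m2 (\sum_(x <- r | Pr x) F x) = \sum_(x <- r | Pr x) Gb m1 m2 (F x).
Proof. by elim/big_rec2: _ => [|x y z _ <-]; rewrite ?Gb0 ?GbD. Qed.

Lemma Gb_const m (u : K) :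
  Gb m m u%:P = mxdiag (fun _ : 'I_m => Lmul u).
Proof.
apply: mxblock_diagE => [a|a c ac]; first by rewrite leqnn subnn coefC.
case: ifP => // ca; rewrite coefC; case: eqP; rewrite ?Lmul0 // => e.
by move: ac; rewrite -(inj_eq val_inj) /= eqn_leq ca -subn_eq0 e.
Qed.

Lemma Gb1 m : Gb m m 1 = 1%:M.
Proof. by rewrite -polyC1 Gb_const Lmul1 mxdiagZ. Qed.

Lemma Gb_jordan m : Gb m m ('X + alpha%:P) = jordan_blk m (compmx p).
Proof.
rewrite /jordan_blk compmx_Lmul; apply: eq_mxblock => a c.
rewrite coefD coefX coefC -(inj_eq val_inj) /=.
case: (ltngtP c a) => ca.
- have -> : (a - c == 0)%N = false by apply/negbTE; rewrite subn_eq0 -ltnNge.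
  rewrite addr0; case: eqP => e.
    have -> : ((a : nat) == c.+1)%N by apply/eqP; lia.
    by rewrite mulr1n Lmul1.
  have /negPf -> : ((a : nat) != c.+1)%N by apply/eqP; lia.
  by rewrite Lmul0.
- have /negPf -> : ((a : nat) != c.+1)%N by apply/eqP; lia.
  done.
- by rewrite ca subnn add0r.
Qed.

Section Fmap.
Variable lam : seq nat.

Definition Fm (M : 'M[{poly K}]_(size lam)) : 'M[k]_(jsize lam d) :=
  @mxblock _ (size lam) (size lam) (fun i => \sum_(j < nth 0 lam i) d)
    (fun i => \sum_(j < nth 0 lam i) d)
    (fun i j => Gb (nth 0 lam i) (nth 0 lam j) (M i j)).

Lemma FmD M M' : Fm (M + M') = Fm M + Fm M'.
Proof. by rewrite /Fm -mxblockD; apply: eq_mxblock => i j; rewrite mxE GbD. Qed.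

Lemma FmZ (c : k) M : Fm ((c%:A)%:P *: M) = c *: Fm M.
Proof. by rewrite /Fm mxblockZ; apply: eq_mxblock => i j; rewrite mxE GbZ. Qed.

Lemma FmM M M' : in_Kxl_alg lam M -> Fm (M *m M') = Fm M *m Fm M'.
Proof.
move=> HM; rewrite /Fm mul_mxblock; apply: eq_mxblock => i l.
rewrite mxE Gb_sum; apply: eq_bigr => j _; rewrite GbM //.
by apply/dvdXnP; apply: HM.
Qed.

Lemma Fm1 : Fm 1%:M = 1%:M.
Proof.
rewrite -(mxdiagZ 1) /Fm; apply: mxblock_diagE => [i|i j ij].
  by rewrite mxE eqxx Gb1.
by rewrite mxE (negPf ij) Gb0.
Qed.

Lemma Fm_eq0 M : all (fun x => 0 < x)%N lam ->
  (Fm M = 0 <-> in_Kxl_ideal lam M).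
Proof.
move=> /allP lp.
rewrite /Fm -(@mxblock0 _ _ _ (fun i : 'I_(size lam) => \sum_(j < nth 0 lam i) d)
  (fun i : 'I_(size lam) => \sum_(j < nth 0 lam i) d)).
have lpos (j : 'I_(size lam)) : (0 < nth 0 lam j)%N by apply/lp/mem_nth.
split.
  by move/eq_mxblockP => H i j; apply/(Gb_eq0 _ _ (lpos j)); rewrite H.
by move=> H; apply: eq_mxblock => i j; apply/(Gb_eq0 _ _ (lpos j)).
Qed.

Lemma Fm_jordan : jordan lam (compmx p) = Fm ('X + alpha%:P)%:M.
Proof.
rewrite /jordan /Fm; symmetry; apply: mxblock_diagE => [i|i j ij].
  by rewrite mxE eqxx mulr1n Gb_jordan.
by rewrite mxE (negPf ij) mulr0n Gb0.
Qed.

End Fmap.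

Lemma Gb_X m : Gb m m 'X =
  @mxblock _ m m (fun _ => d) (fun _ => d) (fun a c => if (a : nat) == c.+1 then 1%:M else 0).
Proof.
apply: eq_mxblock => a c; rewrite coefX.
case: (leqP c a) => ca.
  case: eqP => e.
    have -> : ((a : nat) == c.+1)%N by apply/eqP; lia.
    by rewrite mulr1n Lmul1.
  have /negPf -> : ((a : nat) != c.+1)%N by apply/eqP; lia.
  by rewrite mulr0n Lmul0.
have /negPf -> : ((a : nat) != c.+1)%N by apply/eqP; lia.
done.
Qed.

Definition blkn m1 m2 (Y : 'M[k]_(bsz m1, bsz m2)) (a c : nat) : 'M[k]_d :=
  match (insub a : option 'I_m1), (insub c : option 'I_m2) with
  | Some a', Some c' => @submxblock _ m1 m2 (fun _ => d) (fun _ => d) Y a' c'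
  | _, _ => 0
  end.

Lemma blknE m1 m2 Y (a : 'I_m1) (c : 'I_m2) :
  @blkn m1 m2 Y a c = @submxblock _ m1 m2 (fun _ => d) (fun _ => d) Y a c.
Proof. by rewrite /blkn !valK. Qed.

Lemma blkn_out1 m1 m2 Y a c : (m1 <= a)%N -> @blkn m1 m2 Y a c = 0.
Proof. by move=> h; rewrite /blkn insubN // -leqNgt. Qed.

Lemma blkn_out2 m1 m2 Y a c : (m2 <= c)%N -> @blkn m1 m2 Y a c = 0.
Proof.
move=> h; rewrite /blkn; case: (insub a) => // a'.
by rewrite insubN // -leqNgt.
Qed.

Lemma blkn_shift m1 m2 (Y : 'M[k]_(bsz m1, bsz m2)) :
  Y *m Gb m2 m2 'X = Gb m1 m1 'X *m Y ->
  forall a g, (a < m1)%N -> (g < m2)%N ->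
  blkn Y a g.+1 = if (0 < a)%N then blkn Y a.-1 g else 0.
Proof.
move=> H a g am gm.
have E : Y = @mxblock _ m1 m2 (fun _ => d) (fun _ => d)
   (fun i j => @submxblock _ m1 m2 (fun _ => d) (fun _ => d) Y i j) by rewrite submxblockK.
move: H; rewrite !Gb_X {1 2}E !mul_mxblock => /eq_mxblockP /(_ (Ordinal am) (Ordinal gm)).
rewrite (eq_bigr (fun c : 'I_m2 => if (c:nat) == g.+1 then blkn Y a c else 0)); last first.
  by move=> c _; case: eqP => _; rewrite ?mulmx1 ?mulmx0 // -(blknE Y (Ordinal am) c).
rewrite (eq_bigr (fun c : 'I_m1 => if (0 < a)%N then (if (c:nat) == a.-1 then blkn Y c g else 0) else 0)); last first.
  move=> c _ /=; case: (posnP a) => a0.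
    by rewrite a0 mul0mx.
  case: eqP => e.
    by rewrite e /= eqxx mul1mx -(blknE Y c (Ordinal gm)).
  have /negPf -> : ((c : nat) != a.-1) by apply/eqP; lia.
  by rewrite mul0mx.
have L1 : \sum_(c < m2) (if (c:nat) == g.+1 then blkn Y a c else 0) = blkn Y a g.+1.
  by rewrite (sum_delta m2 g.+1 (fun c => blkn Y a c)); case: ltnP => // h; rewrite blkn_out2.
have L2 : \sum_(c < m1) (if (c:nat) == a.-1 then blkn Y c g else 0) = blkn Y a.-1 g.
  by rewrite (sum_delta m1 a.-1 (fun c => blkn Y c g)); case: ltnP => // h; rewrite blkn_out1.
rewrite L1 => ->; case: (posnP a) => a0; first by rewrite big1.
by rewrite L2.
Qed.

Lemma blkn_shape m1 m2 (Y : 'M[k]_(bsz m1, bsz m2)) :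
  Y *m Gb m2 m2 'X = Gb m1 m1 'X *m Y ->
  forall c, (c <= m2)%N -> forall a, (a < m1)%N ->
  blkn Y a c = if (c <= a)%N then blkn Y (a - c) 0 else 0.
Proof.
move=> H; elim=> [|c IH] cm a am; first by rewrite subn0.
rewrite blkn_shift //; case: (posnP a) => a0; first by rewrite a0.
rewrite IH; try lia.
have -> : (c <= a.-1)%N = (c.+1 <= a)%N by lia.
by have -> : (a.-1 - c = a - c.+1)%N by lia.
Qed.

Definition colK (Z : 'M[k]_d) : K := \sum_(b < d) Z b (Ordinal d_gt0) *: Xb`_b.

Lemma comm_Lmul (Z : 'M[k]_d) :
  (forall u, Z *m Lmul u = Lmul u *m Z) -> Z = Lmul (colK Z).
Proof.
move=> H; apply/matrixP => b e.
have := congr1 (fun A : 'M[k]_d => A b (Ordinal d_gt0)) (H (alpha ^+ e)).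
rewrite !mxE.
rewrite (eq_bigr (fun c => if c == e then Z b c else 0)); last first.
  move=> c _; rewrite mxE Xb_nth expr0 mulr1 -(Xb_nth e) coord_free ?Xb_free //.
  by rewrite eq_sym; case: eqP => _; rewrite ?mulr1 ?mulr0.
rewrite -big_mkcond big_pred1_eq => ->.
rewrite /colK mulr_suml linear_sum; apply: eq_bigr => c _.
by rewrite mxE -scalerAl linearZ /= mulrC (Xb_nth e) [Xb`_c * _]mulrC.
Qed.

Lemma colK0 : colK 0 = 0.
Proof. by rewrite /colK big1 // => b _; rewrite mxE scale0r. Qed.

Definition polyY m1 m2 (Y : 'M[k]_(bsz m1, bsz m2)) : {poly K} :=
  \sum_(t < m1) (colK (blkn Y t 0))%:P * 'X^t.

Lemma coef_polyY m1 m2 (Y : 'M[k]_(bsz m1, bsz m2)) s :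
  (polyY Y)`_s = if (s < m1)%N then colK (blkn Y s 0) else 0.
Proof.
rewrite /polyY coef_sum.
rewrite (eq_bigr (fun t : 'I_m1 => if (t : nat) == s then colK (blkn Y t 0) else 0)).
  by rewrite (sum_delta m1 s (fun t => colK (blkn Y t 0))).
move=> t _; rewrite coefCM coefXn eq_sym.
by case: eqP => _; rewrite ?mulr1 ?mulr0.
Qed.

Lemma GbY m1 m2 (Y : 'M[k]_(bsz m1, bsz m2)) : (0 < m2)%N ->
  (forall u, Y *m Gb m2 m2 u%:P = Gb m1 m1 u%:P *m Y) ->
  Y *m Gb m2 m2 'X = Gb m1 m1 'X *m Y ->
  Gb m1 m2 (polyY Y) = Y /\ (forall t, (t < m1 - m2)%N -> (polyY Y)`_t = 0).
Proof.
move=> m2pos Hu HX.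
have Hc (a : 'I_m1) (c : 'I_m2) :
    @submxblock _ m1 m2 (fun _ => d) (fun _ => d) Y a c =
    Lmul (colK (@submxblock _ m1 m2 (fun _ => d) (fun _ => d) Y a c)).
  apply: comm_Lmul => u.
  have := Hu u; rewrite !Gb_const.
  by move/(@comm_diag_blocks _ m1 m2 (fun _ => d) (fun _ => d)) => /(_ a c).
have Hb t : (t < m1)%N -> blkn Y t 0 = Lmul (colK (blkn Y t 0)).
  by move=> tm; have := blknE Y (Ordinal tm) (Ordinal m2pos); rewrite /= => ->; exact: Hc.
have Hs := blkn_shape HX.
split.
  rewrite -[RHS]submxblockK; apply: eq_mxblock => a c.
  rewrite coef_polyY -blknE (Hs c (ltnW (ltn_ord c)) a (ltn_ord a)).
  case: ifP => ca //.
  have am : (a - c < m1)%N by rewrite (leq_ltn_trans (leq_subr _ _) (ltn_ord a)).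
  by rewrite am -Hb.
move=> t tm; rewrite coef_polyY; case: ifP => // tm1.
have tm2 : (t + m2 < m1)%N by lia.
have := Hs m2 (leqnn _) (t + m2) tm2.
rewrite blkn_out2 // leq_addl addnK => <-.
exact: colK0.
Qed.

Section Final.
Variables (lam : seq nat) (n : nat).
Hypothesis psep : separable_poly p.
Hypothesis lpart : is_partition n lam.

Local Notation mp q := (map_poly (in_alg K) q).
Local Notation Phi P := (@Fm lam (P%:M : 'M[{poly K}]_(size lam))).

Lemma scalar_alg (P : {poly K}) : in_Kxl_alg lam (P%:M : 'M_(size lam)).
Proof.
move=> i j; rewrite mxE; case: eqP => [->|_].
  by rewrite subnn expr0 mulr1n dvd1p.
by rewrite mulr0n dvdp0.
Qed.

Lemma PhiM P Q : Phi (P * Q) = Phi P *m Phi Q.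
Proof. by rewrite scalar_mxM FmM //; apply: scalar_alg. Qed.

Lemma PhiD P Q : Phi (P + Q) = Phi P + Phi Q.
Proof. by rewrite raddfD FmD. Qed.

Lemma PhiB P Q : Phi (P - Q) = Phi P - Phi Q.
Proof. by rewrite -[in RHS](subrK Q P) [in RHS]PhiD addrK. Qed.

Lemma PhiC (c : k) : Phi ((c%:A)%:P) = c%:M.
Proof. by rewrite -scalemx1 FmZ Fm1 scalemx1. Qed.

Lemma comm_ev (B : 'M[k]_(jsize lam d)) (z : {poly K}) :
  B *m Phi z = Phi z *m B ->
  forall r : {poly k}, B *m Phi (mp r \Po z) = Phi (mp r \Po z) *m B.
Proof.
move=> Hz; elim/poly_ind => [|r c IH].
  rewrite rmorph0 comp_poly0; have := PhiC 0; rewrite scale0r polyC0 => ->.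
  by rewrite mul_mx_scalar mul_scalar_mx.
rewrite rmorphD rmorphM /= map_polyX map_polyC /= comp_poly_MXaddC PhiD PhiM PhiC.
by rewrite mulmxDr mulmxDl mulmxA IH -!mulmxA Hz mul_mx_scalar mul_scalar_mx.
Qed.

Lemma lam_pos (i : 'I_(size lam)) : (0 < nth 0 lam i)%N.
Proof. by case: lpart => _ /allP H _; apply/H/mem_nth. Qed.

Lemma lam_le_n (i : 'I_(size lam)) : (nth 0 lam i <= n)%N.
Proof.
case: lpart => _ _ <-; move: (nat_of_ord i); elim: lam => [|x l IH] [|j] //=.
  exact: leq_addr.
by apply: leq_trans (IH j) _; rewrite leq_addl.
Qed.

Lemma PhiE P : Phi P = mxdiag (fun i => Gb (nth 0 lam i) (nth 0 lam i) P).
Proof.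
apply: mxblock_diagE => [i|i j ij]; first by rewrite mxE eqxx mulr1n.
by rewrite mxE (negPf ij) mulr0n Gb0.
Qed.

Lemma Fm_surj (B : 'M[k]_(jsize lam d)) :
  B *m jordan lam (compmx p) = jordan lam (compmx p) *m B ->
  exists2 M, in_Kxl_alg lam M & Fm M = B.
Proof.
rewrite Fm_jordan => HJ.
have pi0 : (mp p)^`().[alpha] != 0.
  rewrite deriv_map; apply: (coprimep_root _ proot).
  by rewrite coprimep_map; move: psep; rewrite unlock /separable_poly.
have [q Hq] := hensel proot pi0 Kgen n.
have Hq' := comm_ev HJ q.
have EA : Phi (mp q \Po ('X + alpha%:P)) = Phi alpha%:P.
  apply/eqP; rewrite -subr_eq0 -PhiB; apply/eqP/Fm_eq0; first by case: lpart.
  move=> i j; rewrite mxE; case: eqP => _; last by rewrite mulr0n dvdp0.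
  rewrite mulr1n; apply: dvdp_trans Hq; exact/dvdp_exp2l/lam_le_n.
have Hal : B *m Phi alpha%:P = Phi alpha%:P *m B by rewrite -EA.
have HU u : B *m Phi u%:P = Phi u%:P *m B.
  have /Fadjoin1_polyP [r ->] : u \in <<1%VS; alpha>>%VS by rewrite Kgen memvf.
  rewrite -comp_polyCr; exact: comm_ev Hal r.
have HX : B *m Phi 'X = Phi 'X *m B.
  have -> : 'X = ('X + alpha%:P) - alpha%:P by rewrite addrK.
  by rewrite PhiB mulmxBr mulmxBl HJ Hal.
pose Y i j := @submxblock _ (size lam) (size lam) (fun i => \sum_(j < nth 0 lam i) d)
    (fun i => \sum_(j < nth 0 lam i) d) B i j.
have Hbu i j u : Y i j *m Gb (nth 0 lam j) (nth 0 lam j) u%:P =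
                 Gb (nth 0 lam i) (nth 0 lam i) u%:P *m Y i j.
  by have := HU u; rewrite !PhiE => /comm_diag_blocks; apply.
have HbX i j : Y i j *m Gb (nth 0 lam j) (nth 0 lam j) 'X =
               Gb (nth 0 lam i) (nth 0 lam i) 'X *m Y i j.
  by have := HX; rewrite !PhiE => /comm_diag_blocks; apply.
pose M := \matrix_(i, j) polyY (Y i j).
exists M.
  move=> i j; rewrite mxE; apply/dvdXnP.
  exact: (GbY (lam_pos j) (Hbu i j) (HbX i j)).2.
rewrite -[RHS]submxblockK; apply: eq_mxblock => i j; rewrite mxE.
exact: (GbY (lam_pos j) (Hbu i j) (HbX i j)).1.
Qed.

End Final.

End Basis.

Unset Implicit Arguments.

Theorem mainTheorem4 (k : fieldType) (p : {poly k})
    (K : fieldExtType k) (alpha : K) (n : nat) (lam : seq nat) :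
  p \is monic -> irreducible_poly p -> separable_poly p ->
  root (map_poly (in_alg K) p) alpha ->
  <<1%VS; alpha>>%VS = fullv ->
  is_partition n lam ->
  centralizer_iso_Kxl (K := K) lam (jordan lam (compmx p)).
Proof.
move=> pmonic pirr psep proot Kgen lpart.
exists (@Fm k K alpha p lam); split.
- move=> M HM; rewrite /in_centralizer (Fm_jordan pmonic pirr proot lam).
  rewrite -!(FmM pmonic pirr proot Kgen) //; last exact: scalar_alg.
  by rewrite mul_mx_scalar mul_scalar_mx.
- exact: (Fm1 pirr proot lam).
- split; [|split].
  + by move=> M M' _ _; exact: FmD.
  + by move=> M M' HM _; exact: (FmM pmonic pirr proot Kgen).
  + by move=> c M _; exact: FmZ.
- by move=> B HB; exact: (Fm_surj pmonic pirr proot Kgen psep lpart).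
- by move=> M _; apply: (Fm_eq0 pmonic pirr proot Kgen); case: lpart.
Qed.
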